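(* Fix $\omega_c>0$. For each integer $D\ge 1$ define the polynomial in $z^{-1}$ $$\psi_D(z):=\sum_{i=0}^{D-1}\frac{2\omega_c}{D\pi}\,\mathrm{sinc}\!\left(\frac{2\omega_c}{D\pi}\Big(i-\frac{D-1}{2}\Big)\right)z^{-i},$$ where $\mathrm{sinc}(x)=\sin(\pi x)/(\pi x)$ for $x\neq 0$ and $\mathrm{sinc}(0)=1$. Then for every fixed $\omega\in\mathbb{R}$, $$\lim_{D\to\infty}\left|\psi_D\!\left(e^{-2\mathrm{i}\omega/D}\right)\right|=\frac{\left|\mathrm{Si}(\omega+\omega_c)-\mathrm{Si}(\omega-\omega_c)\right|}{\pi}=:|\Psi(\omega)|,$$ where $\mathrm{Si}(s)=\int_0^s\frac{\sin\theta}{\theta}\,d\theta$ is the sine integral. Moreover $|\Psi(\omega)|\to 0$ as $\omega\to\pm\infty$, and consequently, for any fixed $\delta\in(0,1)$, the quantity $\frac{\delta^2|\Psi(\omega)|^2}{1-\delta^2|\Psi(\omega)|^2}$ tends to $0$ as $\omega\to\pm\infty$.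
   Context: Here $e^{-2\mathrm{i}\omega/D}$ is the point $z(\omega)=e^{-2\mathrm{i}\omega\epsilon}$ with $\epsilon=1/D$, which lies on the unit circle for real $\omega$. *)

(* Defs.v *)
From Stdlib Require Import Reals Lra.
Open Scope R_scope.

Definition sinc (x : R) : R :=
  if Req_EM_T x 0 then 1 else sin (PI * x) / (PI * x).

Definition sin_over (t : R) : R :=
  if Req_EM_T t 0 then 1 else sin t / t.

Lemma continuity_sin_over : continuity sin_over.
Proof.
  intro x. destruct (Req_EM_T x 0) as [->|Hx].
  - intros eps Heps. destruct (derivable_pt_lim_sin_0 eps Heps) as [d Hd].
    exists d; split; [apply cond_pos|].
    intros y [_ Hy]. unfold Rdist, R_dist in *. simpl in *. unfold sin_over.
    destruct (Req_EM_T 0 0) as [_|C]; [|now elim C].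
    destruct (Req_EM_T y 0) as [->|Hy0].
    + unfold Rdist; replace (1 - 1) with 0 by ring; rewrite Rabs_R0; exact Heps.
    + replace (sin y / y) with ((sin (0 + y) - sin 0) / y)
        by (rewrite Rplus_0_l, sin_0; unfold Rdiv; ring).
      unfold Rdist in *. apply Hd; [exact Hy0|]. now rewrite Rminus_0_r in Hy.
  - apply continuity_pt_locally_ext with (f := fun t => sin t / t) (a := Rabs x).
    + now apply Rabs_pos_lt.
    + intros y Hy. unfold sin_over. destruct (Req_EM_T y 0) as [->|]; [|reflexivity].
      exfalso. rewrite Rdist_sym in Hy. unfold Rdist in Hy. rewrite Rminus_0_r in Hy. lra.
    + apply continuity_pt_div; [apply continuity_sin|apply derivable_continuous_pt, derivable_pt_id|exact Hx].
Qed.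

Lemma Si_integrable (s : R) : Riemann_integrable sin_over 0 s.
Proof.
  destruct (Rle_dec 0 s) as [H|H].
  - apply continuity_implies_RiemannInt; [exact H|]. intros; apply continuity_sin_over.
  - apply RiemannInt_P1, continuity_implies_RiemannInt; [lra|].
    intros; apply continuity_sin_over.
Qed.

Definition Si (s : R) : R := RiemannInt (Si_integrable s).

Definition psi_coef (wc : R) (D i : nat) : R :=
  (2 * wc / (INR D * PI)) *
  sinc ((2 * wc / (INR D * PI)) * (INR i - (INR D - 1) / 2)).

(* psi_D evaluated at z = exp(-2 i w / D): then z^{-i} = cos(2 w i / D) + i sin(2 w i / D).
   Real and imaginary parts, and the complex modulus sqrt(Re^2 + Im^2). *)
Definition psi_re (wc : R) (D : nat) (w : R) : R :=
  sum_f_R0 (fun i => psi_coef wc D i * cos (2 * w * INR i / INR D)) (D - 1).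
Definition psi_im (wc : R) (D : nat) (w : R) : R :=
  sum_f_R0 (fun i => psi_coef wc D i * sin (2 * w * INR i / INR D)) (D - 1).
Definition psi_abs (wc : R) (D : nat) (w : R) : R :=
  sqrt (psi_re wc D w ^ 2 + psi_im wc D w ^ 2).

Definition Psi (wc w : R) : R := (Si (w + wc) - Si (w - wc)) / PI.

(* Main.v *)
Require Import Defs.
From Stdlib Require Import Reals Lra Lia.
From Coquelicot Require Import Coquelicot.
Open Scope R_scope.

Lemma cont_of (g : R -> R) x : continuity_pt g x -> continuous g x.
Proof. intro H; now apply continuity_pt_filterlim. Qed.

Lemma cont_sin_over_lin (c x : R) : continuous (fun t => sin_over (c * t)) x.
Proof.
  apply (continuous_comp (fun t => c * t) sin_over).
  - apply (@ex_derive_continuous R_AbsRing R_NormedModule). auto_derive. auto.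
  - apply cont_of, continuity_sin_over.
Qed.

Lemma cont_trig_lin (c x : R) : continuous (fun t => cos (c * t)) x /\ continuous (fun t => sin (c * t)) x.
Proof.
  split; apply (@ex_derive_continuous R_AbsRing R_NormedModule); auto_derive; auto.
Qed.

Lemma cont_prod3 (K c d : R) (h : R -> R) x : continuous h x ->
  continuous (fun t => K * sin_over (c * t) * h t) x.
Proof.
  intro Hh.
  apply (continuous_mult (fun t => K * sin_over (c * t)) h); [|exact Hh].
  apply (continuous_mult (fun _ => K) (fun t => sin_over (c * t))).
  - apply continuous_const.
  - apply cont_sin_over_lin.
Qed.

Lemma sin_over_even t : sin_over (- t) = sin_over t.
Proof.
  unfold sin_over. destruct (Req_EM_T (-t) 0); destruct (Req_EM_T t 0); try lra.
  rewrite sin_neg. field. auto.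
Qed.

Lemma ex_sin_over a b : ex_RInt sin_over a b.
Proof. apply (@ex_RInt_continuous R_CompleteNormedModule). intros; apply cont_of, continuity_sin_over. Qed.

Lemma Si_RInt s : Si s = RInt sin_over 0 s.
Proof. unfold Si. now rewrite (RInt_Reals sin_over 0 s (Si_integrable s)). Qed.

Lemma Si_odd s : Si (- s) = - Si s.
Proof.
  rewrite !Si_RInt.
  assert (H := RInt_comp_lin sin_over (-1) 0 0 s).
  replace (-1 * 0 + 0) with 0 in H by ring.
  replace (-1 * s + 0) with (-s) in H by ring.
  rewrite <- H by apply ex_sin_over.
  assert (E: RInt (fun y => scal (-1) (sin_over (-1 * y + 0))) 0 s = RInt (fun y => scal (-1) (sin_over y)) 0 s).
  { apply RInt_ext. intros x _. replace (-1 * x + 0) with (-x) by ring. now rewrite sin_over_even. }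
  refine (eq_trans E _). rewrite (RInt_scal (V:=R_CompleteNormedModule)) by apply ex_sin_over.
  unfold scal; simpl; unfold mult; simpl. ring.
Qed.

Lemma RS_cons (f : R -> R) g x0 x1 l :
  Riemann_sum f (SF_seq_f2 g (cons x0 (cons x1 l))) = (x1 - x0) * f (g x0 x1) + Riemann_sum f (SF_seq_f2 g (cons x1 l)).
Proof.
  rewrite SF_cons_f2 by (simpl; lia).
  rewrite Riemann_sum_cons. reflexivity.
Qed.

Lemma mkseq_S (h : nat -> R) k : seq.mkseq h (S k) = cons (h O) (seq.mkseq (fun i => h (S i)) k).
Proof.
  unfold seq.mkseq. simpl. f_equal.
  generalize 0%nat. induction k as [|k IH]; intro m; simpl; [reflexivity|]. f_equal. apply IH.
Qed.

Lemma RS_mkseq (f : R -> R) g : forall n (h : nat -> R),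
  Riemann_sum f (SF_seq_f2 g (seq.mkseq h (S (S n)))) =
  sum_f_R0 (fun i => (h (S i) - h i) * f (g (h i) (h (S i)))) n.
Proof.
  induction n as [|n IH]; intro h.
  - rewrite mkseq_S, mkseq_S. simpl seq.mkseq. rewrite RS_cons. simpl. 
    unfold Riemann_sum. simpl. unfold zero; simpl. ring.
  - rewrite mkseq_S, mkseq_S, RS_cons.
    rewrite <- (mkseq_S (fun i => h (S i)) (S n)), IH.
    rewrite (decomp_sum _ (S n)) by lia. simpl pred. reflexivity.
Qed.

Lemma riemann_mid (f : R -> R) a b : a < b -> ex_RInt f a b ->
  Un_cv (fun n => sum_f_R0 (fun i => (b - a) / (INR n + 1) * f (a + (INR i + /2) * (b - a) / (INR n + 1))) n)
        (RInt f a b).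
Proof.
  intros Hab Hex eps Heps.
  assert (H := RInt_correct (V:=R_CompleteNormedModule) f a b Hex).
  specialize (H (ball (RInt f a b) eps) (locally_ball (RInt f a b) (mkposreal eps Heps))).
  unfold Riemann_fine, within, locally_dist, filtermap in H.
  destruct H as [delta Hd].
  assert (Hd' : 0 < delta / (b - a)) by (apply Rdiv_lt_0_compat; [apply cond_pos|lra]).
  destruct (archimed_cor1 _ Hd') as [N [HN HN0]].
  exists N. intros n Hn.
  assert (HnN : INR N <= INR n) by (apply le_INR; lia).
  assert (HN0' : 0 < INR N) by (apply lt_0_INR; lia).
  destruct (Riemann_fine_unif_part (fun x y => (x + y) / 2) a b n) as [Hs [Hp [Hh Hl]]]; [intros; lra|lra|].
  assert (Hstep : seq_step (SF_lx (SF_seq_f2 (fun x y => (x + y) / 2) (unif_part a b n))) < delta).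
  { eapply Rle_lt_trans; [exact Hs|].
    apply Rle_lt_trans with ((b - a) / INR N).
    - unfold Rdiv. apply Rmult_le_compat_l; [lra|]. apply Rinv_le_contravar; lra.
    - apply Rmult_lt_reg_r with (/ (b - a)). apply Rinv_0_lt_compat; lra.
      replace ((b - a) / INR N * / (b - a)) with (/ INR N) by (field; lra). exact HN. }
  specialize (Hd _ Hstep (conj Hp (conj (eq_trans Hh (eq_sym (Rmin_left _ _ (Rlt_le _ _ Hab))))
                                       (eq_trans Hl (eq_sym (Rmax_right _ _ (Rlt_le _ _ Hab))))))).
  rewrite sign_eq_1 in Hd by lra. unfold scal in Hd; simpl in Hd; unfold mult in Hd; simpl in Hd; rewrite Rmult_1_l in Hd.
  unfold ball in Hd; simpl in Hd; unfold AbsRing_ball, abs, minus, plus, opp in Hd; simpl in Hd.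
  unfold R_dist.
  unfold unif_part in Hd. rewrite RS_mkseq in Hd.
  erewrite sum_eq; [exact Hd|].
  intros i _. cbv beta. rewrite S_INR. f_equal; [field|f_equal; field]; lra.
Qed.

Definition fC wc w t := (2 * wc / PI) * sin_over (2 * wc * t) * cos (2 * w * t).
Definition fS wc w t := (2 * wc / PI) * sin_over (2 * wc * t) * sin (2 * w * t).
Definition tt (n i : nat) := -1/2 + (INR i + /2) * (1/2 - -1/2) / (INR n + 1).
Definition RSum (f : R -> R) n := sum_f_R0 (fun i => (1/2 - -1/2) / (INR n + 1) * f (tt n i)) n.

Lemma sinc_sin_over y : sinc y = sin_over (PI * y).
Proof.
  unfold sinc, sin_over. assert (HP := PI_RGT_0).
  destruct (Req_EM_T y 0) as [Hy|Hy]; destruct (Req_EM_T (PI * y) 0) as [H|H]; try reflexivity.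
  - exfalso; apply H; rewrite Hy; ring.
  - exfalso. apply Rmult_integral in H. destruct H; lra.
Qed.

Lemma psi_coef_eq wc n i : psi_coef wc (S n) i = (1/2 - -1/2) / (INR n + 1) * ((2 * wc / PI) * sin_over (2 * wc * tt n i)).
Proof.
  unfold psi_coef. rewrite sinc_sin_over, S_INR. assert (HP := PI_RGT_0).
  assert (Hn : 0 < INR n + 1) by (generalize (pos_INR n); lra).
  replace (PI * (2 * wc / ((INR n + 1) * PI) * (INR i - (INR n + 1 - 1) / 2))) with (2 * wc * tt n i)
    by (unfold tt; field; lra).
  field; lra.
Qed.

Lemma sum_lin (u v : nat -> R) al be n :
  sum_f_R0 (fun i => al * u i + be * v i) n = al * sum_f_R0 u n + be * sum_f_R0 v n.
Proof. induction n; simpl; [ring|rewrite IHn; ring]. Qed.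

Definition phi n w := 2 * w * (INR n / 2) / (INR n + 1).

Lemma angle n i w : 2 * w * INR i / INR (S n) = 2 * w * tt n i + phi n w.
Proof.
  rewrite S_INR. unfold tt, phi. assert (Hn : 0 < INR n + 1) by (generalize (pos_INR n); lra).
  field; lra.
Qed.

Lemma re_eq wc n w : psi_re wc (S n) w = cos (phi n w) * RSum (fC wc w) n - sin (phi n w) * RSum (fS wc w) n.
Proof.
  unfold psi_re, RSum. replace (S n - 1)%nat with n by lia.
  match goal with |- _ = ?c * ?A - ?s * ?B => replace (c * A - s * B) with (c * A + (- s) * B) by ring end.
  rewrite <- sum_lin.
  apply sum_eq. intros i _. rewrite psi_coef_eq, angle, cos_plus. unfold fC, fS. ring.
Qed.

Lemma im_eq wc n w : psi_im wc (S n) w = sin (phi n w) * RSum (fC wc w) n + cos (phi n w) * RSum (fS wc w) n.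
Proof.
  unfold psi_im, RSum. replace (S n - 1)%nat with n by lia.
  rewrite <- sum_lin.
  apply sum_eq. intros i _. rewrite psi_coef_eq, angle, sin_plus. unfold fC, fS. ring.
Qed.

Lemma abs_eq wc n w : psi_abs wc (S n) w = sqrt (RSum (fC wc w) n * RSum (fC wc w) n + RSum (fS wc w) n * RSum (fS wc w) n).
Proof.
  unfold psi_abs. rewrite re_eq, im_eq. f_equal.
  assert (H := sin2_cos2 (phi n w)). unfold Rsqr in H.
  set (c := cos (phi n w)) in *. set (s := sin (phi n w)) in *.
  set (A := RSum (fC wc w) n). set (B := RSum (fS wc w) n).
  transitivity ((s * s + c * c) * (A * A + B * B)); [ring|rewrite H; ring].
Qed.

Lemma ex_cont (f : R -> R) a b : (forall x, continuous f x) -> ex_RInt f a b.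
Proof. intro H. apply (@ex_RInt_continuous R_CompleteNormedModule). intros; apply H. Qed.

Lemma cont_lin_so (K c x : R) : continuous (fun t => K * sin_over (c * t)) x.
Proof.
  apply (continuous_mult (fun _ => K) (fun t => sin_over (c * t))).
  - apply continuous_const.
  - apply cont_sin_over_lin.
Qed.

Lemma ex_fC wc w a b : ex_RInt (fC wc w) a b.
Proof. apply ex_cont. intro x. unfold fC. exact (cont_prod3 (2 * wc / PI) (2 * wc) 0 (fun t => cos (2 * w * t)) x (proj1 (cont_trig_lin _ _))). Qed.
Lemma ex_fS wc w a b : ex_RInt (fS wc w) a b.
Proof. apply ex_cont. intro x. unfold fS. exact (cont_prod3 (2 * wc / PI) (2 * wc) 0 (fun t => sin (2 * w * t)) x (proj2 (cont_trig_lin _ _))). Qed.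

Lemma IS0 wc w : RInt (fS wc w) (-1/2) (1/2) = 0.
Proof.
  assert (H := RInt_comp_lin (V:=R_CompleteNormedModule) (fS wc w) (-1) 0 (-1/2) (1/2) (ex_fS _ _ _ _)).
  replace (-1 * (-1/2) + 0) with (1/2) in H by field.
  replace (-1 * (1/2) + 0) with (-1/2) in H by field.
  rewrite <- (opp_RInt_swap (V:=R_CompleteNormedModule) (fS wc w) (-1/2) (1/2)) in H by apply ex_fS.
  assert (E : RInt (fun y => scal (-1) (fS wc w (-1 * y + 0))) (-1/2) (1/2) = RInt (fS wc w) (-1/2) (1/2)).
  { apply RInt_ext. intros x _. unfold scal; simpl; unfold mult; simpl. unfold fS.
    replace (2 * wc * (-1 * x + 0)) with (- (2 * wc * x)) by ring.
    replace (2 * w * (-1 * x + 0)) with (- (2 * w * x)) by ring.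
    rewrite sin_over_even, sin_neg. ring. }
  assert (H3 := eq_trans (eq_sym E) H). unfold opp in H3; simpl in H3. lra.
Qed.

Lemma aso a t : t <> 0 -> a * sin_over (2 * a * t) = sin (2 * a * t) / (2 * t).
Proof.
  intro Ht. unfold sin_over. destruct (Req_EM_T (2 * a * t) 0) as [H|H].
  - rewrite H, sin_0. assert (a = 0).
    { apply Rmult_integral in H. destruct H as [H|H]; [|contradiction]. lra. }
    subst; field; auto.
  - field. split; auto. intro Ha; apply H; rewrite Ha; ring.
Qed.

Lemma fC_split wc w t : fC wc w t = / PI * ((wc + w) * sin_over (2 * (wc + w) * t) + (wc - w) * sin_over (2 * (wc - w) * t)).
Proof.
  assert (HP := PI_RGT_0). unfold fC.
  destruct (Req_EM_T t 0) as [->|Ht].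
  - rewrite !Rmult_0_r. unfold sin_over. destruct (Req_EM_T 0 0) as [_|C]; [|lra].
    rewrite cos_0. field. lra.
  - rewrite (aso (wc + w)), (aso (wc - w)) by auto.
    replace (2 * wc / PI * sin_over (2 * wc * t) * cos (2 * w * t)) with (2 / PI * (wc * sin_over (2 * wc * t)) * cos (2 * w * t)) by (field; lra).
    rewrite aso by auto.
    replace (2 * (wc + w) * t) with (2 * wc * t + 2 * w * t) by ring.
    replace (2 * (wc - w) * t) with (2 * wc * t - 2 * w * t) by ring.
    rewrite sin_plus, sin_minus. field. lra.
Qed.

Lemma J_Si a : RInt (fun t => a * sin_over (2 * a * t)) (-1/2) (1/2) = Si a.
Proof.
  assert (H := RInt_comp_lin (V:=R_CompleteNormedModule) sin_over (2 * a) 0 (-1/2) (1/2) (ex_sin_over _ _)).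
  replace (2 * a * (-1/2) + 0) with (-a) in H by field.
  replace (2 * a * (1/2) + 0) with a in H by field.
  assert (E : RInt (fun t => a * sin_over (2 * a * t)) (-1/2) (1/2) =
              RInt (fun t => scal (/2) (scal (2 * a) (sin_over (2 * a * t + 0)))) (-1/2) (1/2)).
  { apply RInt_ext. intros x _. unfold scal; simpl; unfold mult; simpl. rewrite Rplus_0_r. field. }
  rewrite E. rewrite (RInt_scal (V:=R_CompleteNormedModule)).
  2: { apply ex_cont. intro x. unfold scal; simpl; unfold mult; simpl.
       apply (continuous_ext (fun t => 2 * a * sin_over (2 * a * t))). { intro; rewrite Rplus_0_r; auto. }
       apply cont_lin_so. }
  transitivity (scal (/2) (RInt sin_over (-a) a)). { f_equal. exact H. }
  rewrite <- (RInt_Chasles (V:=R_CompleteNormedModule) sin_over (-a) 0 a) by apply ex_sin_over.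
  rewrite <- (opp_RInt_swap (V:=R_CompleteNormedModule)) by apply ex_sin_over.
  rewrite <- !Si_RInt, Si_odd. unfold scal, plus, opp; simpl; unfold mult, plus, opp; simpl. field.
Qed.

Lemma IC_Psi wc w : RInt (fC wc w) (-1/2) (1/2) = Psi wc w.
Proof.
  rewrite (RInt_ext _ (fun t => scal (/ PI) (plus ((wc + w) * sin_over (2 * (wc + w) * t)) ((wc - w) * sin_over (2 * (wc - w) * t))))).
  2: { intros x _. rewrite fC_split. reflexivity. }
  rewrite (RInt_scal (V:=R_CompleteNormedModule)).
  2: { apply ex_cont. intro x. apply (continuous_plus (fun t => (wc + w) * sin_over (2 * (wc + w) * t)) (fun t => (wc - w) * sin_over (2 * (wc - w) * t))); apply cont_lin_so. }
  rewrite (RInt_plus (V:=R_CompleteNormedModule)) by (apply ex_cont; intro; apply cont_lin_so).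
  rewrite !J_Si. unfold Psi. replace (w - wc) with (- (wc - w)) by ring. rewrite Si_odd.
  unfold scal, plus; simpl; unfold mult, plus; simpl. replace (w + wc) with (wc + w) by ring. field.
  apply Rgt_not_eq, PI_RGT_0.
Qed.

Lemma part1 wc w : Un_cv (fun n => psi_abs wc (S n) w) (Rabs (Psi wc w)).
Proof.
  assert (Hab : -1/2 < 1/2) by lra.
  assert (HC : Un_cv (RSum (fC wc w)) (Psi wc w)).
  { rewrite <- IC_Psi. exact (riemann_mid (fC wc w) (-1/2) (1/2) Hab (ex_fC _ _ _ _)). }
  assert (HS : Un_cv (RSum (fS wc w)) 0).
  { rewrite <- (IS0 wc w). exact (riemann_mid (fS wc w) (-1/2) (1/2) Hab (ex_fS _ _ _ _)). }
  assert (H2 := CV_plus _ _ _ _ (CV_mult _ _ _ _ HC HC) (CV_mult _ _ _ _ HS HS)).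
  assert (H3 : Un_cv (fun n => sqrt (RSum (fC wc w) n * RSum (fC wc w) n + RSum (fS wc w) n * RSum (fS wc w) n)) (sqrt (Psi wc w * Psi wc w + 0 * 0))).
  { apply continuity_seq; [|exact H2]. apply continuity_pt_sqrt. nra. }
  rewrite Rmult_0_l, Rplus_0_r in H3. fold (Rsqr (Psi wc w)) in H3. rewrite sqrt_Rsqr_abs in H3.
  intros eps Heps. destruct (H3 eps Heps) as [N HN]. exists N. intros n Hn.
  rewrite abs_eq. apply HN; auto.
Qed.

Lemma abs_cos_le t : Rabs (cos t) <= 1.
Proof. apply Rabs_le, COS_bound. Qed.

Lemma tail a b : 0 < a <= b -> Rabs (RInt sin_over a b) <= 2 / a + (b - a) / (a * a).
Proof.
  intros [Ha Hab].
  set (G := fun t => - cos t / t).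
  set (dG := fun t => sin t / t + cos t / (t * t)).
  set (q := fun t => cos t / (t * t)).
  assert (HG : is_RInt dG a b (minus (G b) (G a))).
  { apply (is_RInt_derive (V:=R_CompleteNormedModule)).
    - intros x Hx. rewrite Rmin_left, Rmax_right in Hx by lra.
      unfold G, dG. auto_derive; [lra|]. field. lra.
    - intros x Hx. rewrite Rmin_left, Rmax_right in Hx by lra.
      apply (@ex_derive_continuous R_AbsRing R_NormedModule). unfold dG. auto_derive. repeat split; nra. }
  assert (Hexd : ex_RInt dG a b) by (eexists; exact HG).
  assert (Hext : forall x, Rmin a b < x < Rmax a b -> minus (dG x) (sin_over x) = q x).
  { intros x Hx. rewrite Rmin_left, Rmax_right in Hx by lra.
    unfold dG, q, sin_over. destruct (Req_EM_T x 0); [lra|]. unfold minus, plus, opp; simpl. ring. }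
  assert (Hexq : ex_RInt q a b).
  { apply (ex_RInt_ext (V:=R_NormedModule) (fun x => minus (dG x) (sin_over x)) q a b Hext).
    exact (ex_RInt_minus (V:=R_NormedModule) dG sin_over a b Hexd (ex_sin_over a b)). }
  assert (E : RInt sin_over a b = minus (RInt dG a b) (RInt q a b)).
  { rewrite <- (RInt_minus (V:=R_CompleteNormedModule)) by auto.
    apply RInt_ext. intros x Hx. rewrite Rmin_left, Rmax_right in Hx by lra.
    unfold dG, q, sin_over. destruct (Req_EM_T x 0); [lra|]. unfold minus, plus, opp; simpl. ring. }
  rewrite E, (is_RInt_unique _ _ _ _ HG).
  assert (Hq := abs_RInt_le_const q a b (1 / (a * a)) Hab Hexq).
  assert (Hq' : Rabs (RInt q a b) <= (b - a) * (1 / (a * a))).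
  { apply Hq. intros t Ht. unfold q. rewrite Rabs_div by nra. rewrite Rabs_pos_eq with (x := t * t) by nra.
    apply Rle_trans with (1 / (t * t)).
    - unfold Rdiv. apply Rmult_le_compat_r; [left; apply Rinv_0_lt_compat; nra|]. apply abs_cos_le.
    - unfold Rdiv. rewrite !Rmult_1_l. apply Rinv_le_contravar; nra. }
  unfold minus, plus, opp; simpl. unfold G.
  assert (H1 : Rabs (- cos b / b) <= 1 / a).
  { rewrite Rabs_div by lra. rewrite Rabs_Ropp, (Rabs_pos_eq b) by lra.
    apply Rle_trans with (1 / b).
    - unfold Rdiv. apply Rmult_le_compat_r; [left; apply Rinv_0_lt_compat; lra|]. apply abs_cos_le.
    - unfold Rdiv. rewrite !Rmult_1_l. apply Rinv_le_contravar; lra. }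
  assert (H2 : Rabs (- cos a / a) <= 1 / a).
  { rewrite Rabs_div by lra. rewrite Rabs_Ropp, (Rabs_pos_eq a) by lra.
    unfold Rdiv. apply Rmult_le_compat_r; [left; apply Rinv_0_lt_compat; lra|]. apply abs_cos_le. }
  replace ((b - a) / (a * a)) with ((b - a) * (1 / (a * a))) by (field; lra).
  replace (2 / a) with (1 / a + 1 / a) by (field; lra).
  eapply Rle_trans; [apply Rabs_triang|]. rewrite Rabs_Ropp.
  apply Rplus_le_compat; [|exact Hq'].
  eapply Rle_trans; [apply Rabs_triang|]. rewrite Rabs_Ropp. lra.
Qed.

Lemma Si_diff a b : Si b - Si a = RInt sin_over a b.
Proof.
  rewrite !Si_RInt. rewrite <- (RInt_Chasles (V:=R_CompleteNormedModule) sin_over 0 a b) by apply ex_sin_over.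
  unfold plus; simpl. ring.
Qed.

Lemma part2 wc : 0 < wc -> forall eps, 0 < eps -> exists M, forall w, M < Rabs w -> Rabs (Psi wc w) < eps.
Proof.
  intros hwc eps Heps.
  set (c := 2 + 2 * wc).
  assert (Hc : 0 < c) by (unfold c; lra).
  assert (HK : 0 < c / eps) by (apply Rdiv_lt_0_compat; lra).
  exists (wc + 1 + c / eps). intros w Hw.
  assert (key : Rabs (Si (w + wc) - Si (w - wc)) = Rabs (Si (Rabs w + wc) - Si (Rabs w - wc))).
  { destruct (Rcase_abs w) as [Hn|Hp].
    - rewrite (Rabs_left w Hn).
      replace (w + wc) with (- (- w - wc)) by ring. replace (w - wc) with (- (- w + wc)) by ring.
      rewrite !Si_odd. apply f_equal. lra.
    - rewrite (Rabs_pos_eq w) by lra. reflexivity. }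
  set (x := Rabs w) in *.
  set (a := x - wc).
  assert (Ha : 1 + c / eps < a) by (unfold a; lra).
  assert (Htail := tail a (x + wc) (conj (ltac:(lra) : 0 < a) (ltac:(unfold a; lra) : a <= x + wc))).
  rewrite <- Si_diff in Htail. fold a in Htail.
  replace (x + wc - a) with (2 * wc) in Htail by (unfold a; ring).
  assert (Hca : c < eps * a).
  { assert (c = c / eps * eps) by (field; lra). nra. }
  assert (Hb : 2 / a + 2 * wc / (a * a) < eps).
  { assert (Hia : 0 < / a) by (apply Rinv_0_lt_compat; lra).
    assert (Haia : a * / a = 1) by (field; lra).
    replace (2 / a + 2 * wc / (a * a)) with ((2 + 2 * wc * / a) * / a) by (field; lra).
    assert (/ a <= 1) by nra.
    assert ((2 + 2 * wc * / a) <= c) by (unfold c; nra).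
    apply Rle_lt_trans with (c * / a); [nra|].
    apply Rmult_lt_reg_r with a; [lra|]. rewrite Rmult_assoc, (Rmult_comm (/ a)), Haia. lra. }
  unfold Psi. assert (HP := PI_RGT_0). assert (HP3 : 1 < PI) by (assert (H9 := PI2_1); lra).
  rewrite Rabs_div by lra. rewrite (Rabs_pos_eq PI) by lra. rewrite key.
  apply Rle_lt_trans with (Rabs (Si (x + wc) - Si (x - wc))).
  - unfold Rdiv. rewrite <- (Rmult_1_r (Rabs _)) at 2. apply Rmult_le_compat_l; [apply Rabs_pos|].
    rewrite <- Rinv_1. apply Rinv_le_contravar; lra.
  - fold a. lra.
Qed.

Theorem mainTheorem2 (wc : R) (hwc : 0 < wc) :
  (forall w : R, Un_cv (fun n : nat => psi_abs wc (S n) w) (Rabs (Psi wc w))) /\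
  (forall eps : R, 0 < eps -> exists M : R, forall w : R,
      M < Rabs w -> Rabs (Psi wc w) < eps) /\
  (forall delta : R, 0 < delta < 1 ->
    forall eps : R, 0 < eps -> exists M : R, forall w : R,
      M < Rabs w ->
      Rabs (delta ^ 2 * Rabs (Psi wc w) ^ 2 / (1 - delta ^ 2 * Rabs (Psi wc w) ^ 2)) < eps).
Proof.
  split; [apply part1|]. split; [apply part2; exact hwc|].
  intros delta Hd eps Heps.
  destruct (part2 wc hwc (Rmin (1/2) (eps / 4)) (Rmin_pos (1/2) (eps/4) ltac:(lra) ltac:(lra))) as [M HM].
  exists M. intros w Hw. specialize (HM w Hw).
  assert (H1 := Rmin_l (1/2) (eps/4)). assert (H2 := Rmin_r (1/2) (eps/4)).
  set (p := Rabs (Psi wc w)) in *.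
  assert (Hp : 0 <= p) by apply Rabs_pos.
  set (qq := delta ^ 2 * p ^ 2).
  assert (Hq0 : 0 <= qq) by (unfold qq; simpl; nra).
  assert (Hd2 : delta ^ 2 <= 1) by (simpl; nra).
  assert (Hq1 : qq <= p * p) by (unfold qq; simpl; nra).
  assert (Hpp : p * p <= p / 2) by nra.
  assert (Hq2 : qq < 1 / 2) by lra.
  rewrite Rabs_pos_eq.
  - apply Rle_lt_trans with (2 * qq).
    + unfold Rdiv. apply Rmult_le_reg_r with (1 - qq); [lra|].
      rewrite Rmult_assoc, Rinv_l by lra. nra.
    + lra.
  - unfold Rdiv. apply Rmult_le_pos; [lra|]. left; apply Rinv_0_lt_compat; lra.
Qed.
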